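(* Consider a solution $(\Sigma_+,\mathcal{R}_1,\mathcal{R}_2,M,\psi,v)$, defined for all $\tau\ge\tau_0$, of the system \begin{align*} \Sigma_+' &= -(1-\Sigma_+^2)\Sigma_+ - \mathcal{R}_1 + (1+\Sigma_+)\mathcal{R}_2\cos 2\psi - \frac{4\Omega v^2}{3+v^2},\\ \mathcal{R}_1' &= 2\big[(1+\Sigma_+)\Sigma_+ + \mathcal{R}_2\cos 2\psi\big]\mathcal{R}_1 - 2(1+\Sigma_+)(\cos 2\psi)\mathcal{R}_2,\\ \mathcal{R}_2' &= 2\big[(1+\Sigma_+)\Sigma_+ + \mathcal{R}_2\cos 2\psi\big]\mathcal{R}_2 - 2(1+\Sigma_+)(\cos 2\psi)\mathcal{R}_1,\\ M' &= -\big[(1+\Sigma_+)^2 + \mathcal{R}_2\cos 2\psi + 3\mathcal{R}_2 M\sin 2\psi\big]M,\\ \psi' &= \frac{2}{M} + (1+\Sigma_+)\frac{\mathcal{R}_1}{\mathcal{R}_2}\sin 2\psi,\\ v' &= \frac{6}{3-v^2}\Sigma_+(1-v^2)v, \end{align*} with constraint $\mathcal{R}_1^2-\mathcal{R}_2^2-\left(\frac{4\Omega v}{3+v^2}\right)^2=0$, where $\Omega:=1-\Sigma_+^2-\mathcal{R}_1$ (so that $\Omega'=2\big[\Sigma_+^2+\mathcal{R}_2\cos2\psi+\frac{4v^2}{3+v^2}\Sigma_+\big]\Omega$). Then it is not possible that both \[ \lim_{\tau\to+\infty}\Omega=0\quad\text{and}\quad \lim_{\tau\to+\infty}\Sigma_+=\alpha\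 \text{ for some } 0\le\alpha<1. \]
   Context: This system describes spatially homogeneous Bianchi type VII$_0$ cosmologies with a tilted irrotational radiation perfect fluid, zero cosmological constant, in Hubble-normalized variables with dimensionless time $\tau$; $'$ denotes $d/d\tau$. Here $\mathcal{R}_1,\mathcal{R}_2,\psi$ are rotation-invariant combinations of Hubble-normalized shear and curvature components with $\mathcal{R}_1>0$, $\mathcal{R}_2>0$, and $M=1/N_+$ with $N_+$ a Hubble-normalized spatial curvature variable; for these cosmologies it is a known standing fact, used by the paper, that $M\to0$ as $\tau\to+\infty$. *)

(* Defs.v *)
From Stdlib Require Import Reals.
From Coquelicot Require Import Coquelicot.
Open Scope R_scope.

Definition Omega (Sp R1 : R) : R := 1 - Sp ^ 2 - R1.

(* Main.v *)
Require Import Defs.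
From Stdlib Require Import Reals Lra Psatz.
From Coquelicot Require Import Coquelicot.
Open Scope R_scope.

Lemma dplus (f g : R -> R) (x a b : R) : is_derive f x a -> is_derive g x b -> is_derive (fun t => f t + g t) x (a + b).
Proof. rewrite !is_derive_Reals. intros. apply (derivable_pt_lim_plus f g); auto. Qed.
Lemma dminus (f g : R -> R) (x a b : R) : is_derive f x a -> is_derive g x b -> is_derive (fun t => f t - g t) x (a - b).
Proof. rewrite !is_derive_Reals. intros. apply (derivable_pt_lim_minus f g); auto. Qed.
Lemma dmult (f g : R -> R) (x a b : R) : is_derive f x a -> is_derive g x b -> is_derive (fun t => f t * g t) x (a * g x + f x * b).
Proof. apply Derive.is_derive_mult. Qed.
Lemma dconst (k x : R) : is_derive (fun _ => k) x 0.
Proof. rewrite is_derive_Reals. apply derivable_pt_lim_const. Qed.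
Lemma dsin2 (f : R -> R) (x a : R) : is_derive f x a -> is_derive (fun t => sin (2 * f t)) x (cos (2 * f x) * (2 * a)).
Proof. rewrite !is_derive_Reals. intros H.
  apply (derivable_pt_lim_comp (fun t => 2 * f t) sin).
  - replace (2 * a) with (0 * f x + 2 * a) by ring.
    apply (derivable_pt_lim_mult (fun _ => 2) f); auto. apply derivable_pt_lim_const.
  - apply derivable_pt_lim_sin. Qed.
Lemma deq (f : R -> R) (x a b : R) : is_derive f x a -> a = b -> is_derive f x b.
Proof. intros H ->; exact H. Qed.

Definition EB (f : R -> R) := exists B, Rbar_locally' p_infty (fun t => Rabs (f t) <= B).

Lemma EB_plus f g : EB f -> EB g -> EB (fun t => f t + g t).
Proof. intros [B1 [N1 H1]] [B2 [N2 H2]]. exists (B1 + B2), (Rmax N1 N2). intros t Ht.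
  assert (N1 < t) by (eapply Rle_lt_trans; [apply Rmax_l|exact Ht]).
  assert (N2 < t) by (eapply Rle_lt_trans; [apply Rmax_r|exact Ht]).
  specialize (H1 t H). specialize (H2 t H0).
  eapply Rle_trans. apply Rabs_triang. lra. Qed.
Lemma EB_opp f : EB f -> EB (fun t => - f t).
Proof. intros [B H]. exists B. revert H. apply filter_imp. intros t. rewrite Rabs_Ropp. auto. Qed.
Lemma EB_minus f g : EB f -> EB g -> EB (fun t => f t - g t).
Proof. intros. apply EB_plus; auto. apply EB_opp; auto. Qed.
Lemma EB_mult f g : EB f -> EB g -> EB (fun t => f t * g t).
Proof. intros [B1 [N1 H1]] [B2 [N2 H2]]. exists (B1 * B2), (Rmax N1 N2). intros t Ht.
  assert (N1 < t) by (eapply Rle_lt_trans; [apply Rmax_l|exact Ht]).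
  assert (N2 < t) by (eapply Rle_lt_trans; [apply Rmax_r|exact Ht]).
  specialize (H1 t H). specialize (H2 t H0). rewrite Rabs_mult.
  apply Rmult_le_compat; auto; apply Rabs_pos. Qed.
Lemma EB_const k : EB (fun _ => k).
Proof. exists (Rabs k), 0. intros; lra. Qed.
Lemma EB_pow f n : EB f -> EB (fun t => f t ^ n).
Proof. intros H. induction n; simpl. apply EB_const. apply EB_mult; auto. Qed.
Lemma EB_sin f : EB (fun t => sin (f t)).
Proof. exists 1, 0. intros. apply Rabs_le. pose proof (SIN_bound (f x)). lra. Qed.
Lemma EB_cos f : EB (fun t => cos (f t)).
Proof. exists 1, 0. intros. apply Rabs_le. pose proof (COS_bound (f x)). lra. Qed.
Lemma EB_lim f (l : R) : is_lim f p_infty l -> EB f.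
Proof. intros H. apply is_lim_spec in H. specialize (H (mkposreal 1 Rlt_0_1)).
  exists (Rabs l + 1). revert H. apply filter_imp. simpl. intros t Ht.
  pose proof (Rabs_triang_inv (f t) l). lra. Qed.

Lemma lim0_EB f g : is_lim f p_infty 0 -> EB g -> is_lim (fun t => f t * g t) p_infty 0.
Proof. intros Hf [B [N HB]]. apply is_lim_spec. apply is_lim_spec in Hf.
  intros eps. set (B' := Rabs B + 1).
  assert (HB' : 0 < B') by (unfold B'; pose proof (Rabs_pos B); lra).
  assert (He : 0 < eps / B') by (apply Rdiv_lt_0_compat; [apply cond_pos|lra]).
  destruct (Hf (mkposreal _ He)) as [N2 H2]. simpl in H2.
  exists (Rmax N N2). intros t Ht.
  assert (N < t) by (eapply Rle_lt_trans; [apply Rmax_l|exact Ht]).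
  assert (N2 < t) by (eapply Rle_lt_trans; [apply Rmax_r|exact Ht]).
  specialize (HB t H). specialize (H2 t H0). rewrite Rminus_0_r in *.
  rewrite Rabs_mult.
  assert (Rabs (g t) < B') by (unfold B'; pose proof (Rle_abs B); lra).
  apply Rle_lt_trans with (Rabs (f t) * B').
  apply Rmult_le_compat_l; [apply Rabs_pos | lra].
  apply Rmult_lt_reg_r with (/ B'). apply Rinv_0_lt_compat; lra.
  rewrite Rmult_assoc, Rinv_r by lra. rewrite Rmult_1_r. exact H2. Qed.

Lemma lim_plus f g (a b : R) : is_lim f p_infty a -> is_lim g p_infty b -> is_lim (fun t => f t + g t) p_infty (a + b).
Proof. intros. apply is_lim_plus'; auto. Qed.
Lemma lim_mult f g (a b : R) : is_lim f p_infty a -> is_lim g p_infty b -> is_lim (fun t => f t * g t) p_infty (a * b).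
Proof. intros. apply (is_lim_mult f g p_infty a b); auto. simpl; auto. Qed.
Lemma lim_opp f (a : R) : is_lim f p_infty a -> is_lim (fun t => - f t) p_infty (- a).
Proof. intros. apply (is_lim_opp f p_infty a); auto. Qed.
Lemma lim_const (a : R) : is_lim (fun _ => a) p_infty a.
Proof. apply is_lim_const. Qed.
Lemma lim_minus f g (a b : R) : is_lim f p_infty a -> is_lim g p_infty b -> is_lim (fun t => f t - g t) p_infty (a - b).
Proof. intros. apply lim_plus; auto. apply lim_opp; auto. Qed.
Lemma lim_pow f (a : R) n : is_lim f p_infty a -> is_lim (fun t => f t ^ n) p_infty (a ^ n).
Proof. intros H. induction n; simpl. apply lim_const. apply lim_mult; auto. Qed.
Lemma lim_eq f (a b : R) : is_lim f p_infty a -> a = b -> is_lim f p_infty b.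
Proof. intros H ->; exact H. Qed.

Ltac eb := repeat (first [ assumption | apply EB_sin | apply EB_cos | apply EB_pow
   | apply EB_plus | apply EB_minus | apply EB_mult | apply EB_opp | apply EB_const ]).
Ltac lm := repeat (first [ assumption | apply lim_pow | apply lim_plus | apply lim_minus
   | apply lim_mult | apply lim_opp | apply lim_const ]).

Theorem lemma2 (tau0 : R) (Sp R1 R2 M psi v : R -> R)
  (* standing assumptions / well-definedness on [tau0, +oo) *)
  (hR1 : forall t, tau0 <= t -> 0 < R1 t)
  (hR2 : forall t, tau0 <= t -> 0 < R2 t)
  (hM : forall t, tau0 <= t -> M t <> 0)
  (hv : forall t, tau0 <= t -> 3 - v t ^ 2 <> 0)
  (* the evolution equations *)
  (dSp : forall t, tau0 < t ->
     is_derive Sp t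
       (- (1 - Sp t ^ 2) * Sp t - R1 t + (1 + Sp t) * R2 t * cos (2 * psi t)
        - 4 * Omega (Sp t) (R1 t) * v t ^ 2 / (3 + v t ^ 2)))
  (dR1 : forall t, tau0 < t ->
     is_derive R1 t
       (2 * ((1 + Sp t) * Sp t + R2 t * cos (2 * psi t)) * R1 t
        - 2 * (1 + Sp t) * cos (2 * psi t) * R2 t))
  (dR2 : forall t, tau0 < t ->
     is_derive R2 t
       (2 * ((1 + Sp t) * Sp t + R2 t * cos (2 * psi t)) * R2 t
        - 2 * (1 + Sp t) * cos (2 * psi t) * R1 t))
  (dM : forall t, tau0 < t ->
     is_derive M t
       (- ((1 + Sp t) ^ 2 + R2 t * cos (2 * psi t)
           + 3 * R2 t * M t * sin (2 * psi t)) * M t))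
  (dpsi : forall t, tau0 < t ->
     is_derive psi t
       (2 / M t + (1 + Sp t) * (R1 t / R2 t) * sin (2 * psi t)))
  (dv : forall t, tau0 < t ->
     is_derive v t (6 / (3 - v t ^ 2) * Sp t * (1 - v t ^ 2) * v t))
  (* the constraint *)
  (hcon : forall t, tau0 <= t ->
     R1 t ^ 2 - R2 t ^ 2
       - (4 * Omega (Sp t) (R1 t) * v t / (3 + v t ^ 2)) ^ 2 = 0)
  (* standing fact: M -> 0 as tau -> +oo *)
  (hMlim : is_lim M p_infty 0) :
  ~ (is_lim (fun t => Omega (Sp t) (R1 t)) p_infty 0 /\
     exists alpha : R, 0 <= alpha < 1 /\ is_lim Sp p_infty alpha).
Proof.
  intros [HO [al [[Ha0 Ha1] HS]]].
  pose (D := (1 - al ^ 2) * (1 + al)).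
  assert (HD : 0 < D) by (unfold D; nra).
  pose (Om := fun t => Omega (Sp t) (R1 t)).
  pose (s := fun t => sin (2 * psi t)).
  pose (c := fun t => cos (2 * psi t)).
  pose (w := fun t => v t ^ 2 / (3 + v t ^ 2)).
  pose (dS := fun t => -(1 - Sp t ^ 2) * Sp t - R1 t + (1 + Sp t) * R2 t * c t - 4 * Om t * w t).
  pose (dR := fun t => 2 * ((1 + Sp t) * Sp t + R2 t * c t) * R2 t - 2 * (1 + Sp t) * c t * R1 t).
  pose (K := fun t => (1 + Sp t) ^ 2 + R2 t * c t + 3 * R2 t * M t * s t).
  pose (E := fun t => - (dS t * R2 t * s t + (1 + Sp t) * dR t * s t - (1 + Sp t) * R2 t * K t * s t) * / 4
                      - (1 + Sp t) ^ 2 * R1 t * s t * c t * / 2).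
  pose (A0 := fun t => -(1 - Sp t ^ 2) * Sp t - R1 t).
  pose (dQ := fun t => A0 t + Om t * (-4 * w t) + M t * E t).
  pose (Q := fun t => Sp t - (1 + Sp t) * R2 t * M t * s t * / 4).
  assert (HR1 : is_lim R1 p_infty (1 - al ^ 2 - 0)).
  { apply (is_lim_ext (fun t => 1 - Sp t ^ 2 - Om t)).
    intros t; unfold Om, Omega; ring. lm. }
  assert (EBS : EB Sp) by (eapply EB_lim; eauto).
  assert (EBR1 : EB R1) by (eapply EB_lim; eauto).
  assert (EBM : EB M) by (eapply EB_lim; eauto).
  assert (EBO : EB Om) by (eapply EB_lim; eauto).
  assert (EBw : EB w).
  { exists 1, tau0. intros t _. unfold w. pose proof (pow2_ge_0 (v t)).
    rewrite Rabs_right. apply Rmult_le_reg_r with (3 + v t ^ 2). lra.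
    unfold Rdiv. rewrite Rmult_assoc, Rinv_l by lra. lra.
    apply Rle_ge. apply Rdiv_le_0_compat; lra. }
  assert (EBR2 : EB R2).
  { destruct EBR1 as [B [N HB]]. exists B, (Rmax N tau0). intros t Ht.
    assert (N < t) by (eapply Rle_lt_trans; [apply Rmax_l|exact Ht]).
    assert (tau0 < t) by (eapply Rle_lt_trans; [apply Rmax_r|exact Ht]).
    specialize (HB t H). specialize (hcon t (Rlt_le _ _ H0)).
    specialize (hR1 t (Rlt_le _ _ H0)). specialize (hR2 t (Rlt_le _ _ H0)).
    rewrite Rabs_right in * by lra.
    set (X := 4 * Omega (Sp t) (R1 t) * v t / (3 + v t ^ 2)) in hcon.
    assert (R2 t ^ 2 <= R1 t ^ 2) by nra. nra. }
  assert (EBs : EB s) by apply EB_sin.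
  assert (EBc : EB c) by apply EB_cos.
  assert (EBE : EB E).
  { unfold E, dS, dR, K. eb. }
  assert (HdQ : is_lim dQ p_infty (- D)).
  { apply lim_eq with ((-(1 - al ^ 2) * al - (1 - al ^ 2 - 0)) + 0 + 0).
    unfold dQ. apply lim_plus. apply lim_plus. unfold A0. lm.
    apply lim0_EB; auto. eb. apply lim0_EB; auto.
    unfold D; ring. }
  assert (HQ : is_lim Q p_infty (al - 0)).
  { unfold Q. apply (is_lim_ext (fun t => Sp t - M t * ((1 + Sp t) * R2 t * s t * / 4))).
    intros; ring. apply lim_minus; auto. apply lim0_EB; auto. eb. }
  assert (Hder : forall t, tau0 < t -> is_derive Q t (dQ t)).
  { intros t Ht. unfold Q. eapply deq.
    { apply dminus. apply dSp; auto.
      apply dmult. apply dmult. apply dmult. apply dmult.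
      apply dplus. apply dconst. apply dSp; auto. apply dR2; auto. apply dM; auto.
      apply dsin2. apply dpsi; auto. apply dconst. }
    pose proof (hM t (Rlt_le _ _ Ht)). pose proof (hR2 t (Rlt_le _ _ Ht)).
    assert (3 + v t ^ 2 <> 0) by (pose proof (pow2_ge_0 (v t)); lra).
    unfold dQ, A0, E, dS, dR, K, Om, Omega, s, c, w. field. lra. }
  apply is_lim_spec in HdQ. apply is_lim_spec in HQ.
  destruct (HdQ (mkposreal (D/2) ltac:(lra))) as [N1 H1].
  destruct (HQ (mkposreal 1 Rlt_0_1)) as [N2 H2]. simpl in H1, H2.
  set (a := Rmax (Rmax N1 N2) tau0 + 1).
  assert (Ha : N1 < a /\ N2 < a /\ tau0 < a).
  { unfold a. pose proof (Rmax_l (Rmax N1 N2) tau0). pose proof (Rmax_r (Rmax N1 N2) tau0).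
    pose proof (Rmax_l N1 N2). pose proof (Rmax_r N1 N2). lra. }
  assert (HDb : 0 < 8 / D) by (apply Rdiv_lt_0_compat; lra).
  destruct (MVT_cor2 Q dQ a (a + 8 / D)) as [x [Hx1 Hx2]]. lra.
  { intros x Hx. apply is_derive_Reals. apply Hder. lra. }
  assert (Hx3 := H1 x ltac:(lra)).
  assert (Hqa := H2 a ltac:(lra)). assert (Hqb := H2 (a + 8 / D) ltac:(lra)).
  apply Rabs_def2 in Hx3. apply Rabs_def2 in Hqa. apply Rabs_def2 in Hqb.
  assert (dQ x * (a + 8 / D - a) < - D / 2 * (8 / D)).
  { replace (a + 8 / D - a) with (8 / D) by ring. apply Rmult_lt_compat_r; lra. }
  replace (- D / 2 * (8 / D)) with (-4) in H by (field; lra). lra.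
Qed.
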